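(* Let $p$ be an odd prime. Let $\mathbf v=(1,\dots,1,0,\dots,0)\in(\mathbb{F}_2)^p$ be the vector whose first $(p+1)/2$ entries are $1$ and last $(p-1)/2$ entries are $0$, and for $i\ge 0$ let $\mathbf v_i$ be the vector obtained from $\mathbf v$ by $i$ cyclic shifts, where a cyclic shift sends $(c_0,c_1,\dots,c_{p-1})$ to $(c_{p-1},c_0,\dots,c_{p-2})$. For $\alpha\in\{1,\dots,p-1\}$ let $A_\alpha$ be the $p\times p$ binary array whose row $i$ ($i=0,\dots,p-1$) is $\mathbf v_r$, where $r\in\{0,\dots,p-1\}$, $r\equiv \alpha i\pmod p$. For binary arrays $A,B$ of the same size and $x,y\in\{0,1\}$, let $|AB|_{(x,y)}$ be the number of cells in which $A$ has entry $x$ and $B$ has entry $y$. Then for all distinct $\alpha,\beta\in\{1,\dots,p-1\}$: (a) $|A_\alpha A_\beta|_{(1,0)}=|A_\alpha A_\beta|_{(0,1)}=(p^2-1)/4$; (b) $|A_\alpha A_\beta|_{(0,0)}=(p-1)^2/4$; (c) $|A_\alpha A_\beta|_{(1,1)}=(p+1)^2/4$. *)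

(* Defs.v *)
From mathcomp Require Import all_boot.
Set Implicit Arguments. Unset Strict Implicit. Unset Printing Implicit Defensive.

(* Binary entries are booleans: true = 1, false = 0. Indices 0..p-1 are nats. *)

Definition basevec (p j : nat) : bool := j < p.+1./2.

Definition cshift (p : nat) (c : nat -> bool) : nat -> bool :=
  fun j => c ((j + p.-1) %% p).

Definition shiftvec (p i : nat) : nat -> bool := iter i (cshift p) (basevec p).

Definition arrA (p alpha : nat) (i j : nat) : bool :=
  shiftvec p ((alpha * i) %% p) j.

Definition cellcount (p : nat) (A B : nat -> nat -> bool) (x y : bool) : nat :=
  #|[set c : 'I_p * 'I_p | (A c.1 c.2 == x) && (B c.1 c.2 == y)]|.

(* Main.v *)
Require Import Defs.
From mathcomp Require Import all_boot.
From mathcomp Require Import zify.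

Lemma shiftvecE p i j : 0 < p -> j < p ->
  shiftvec p i j = basevec p ((j + i * p.-1) %% p).
Proof.
move=> p0; elim: i j => [|i IH] j jp.
  by rewrite /shiftvec /= mul0n addn0 modn_small.
rewrite /shiftvec iterS /cshift -/(shiftvec p i) IH ?ltn_pmod //.
by rewrite modnDml mulSn addnA.
Qed.

Lemma arrAE p a i j : 0 < p -> j < p ->
  arrA p a i j = basevec p ((j + a * i * p.-1) %% p).
Proof.
move=> p0 jp; rewrite /arrA shiftvecE //.
by rewrite -modnDmr modnMml modnDmr.
Qed.

Lemma mod_cancel p k a b : prime p -> ~~ (p %| k) -> a < p -> b < p ->
  k * a = k * b %[mod p] -> a = b.
Proof.
move=> pp nk.
wlog ab : a b / a <= b.
  move=> W ap bp E; case: (leqP a b) => h; first exact: W.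
  by apply/esym; apply: W => //; apply: ltnW.
move=> ap bp /eqP; rewrite eq_sym eqn_mod_dvd ?leq_mul // -mulnBr Euclid_dvdM //.
rewrite (negbTE nk) /= => d.
case: (posnP (b - a)) => [|h]; first by lia.
have := dvdn_leq h d; lia.
Qed.

Lemma cancel_ab p a b i i' : prime p -> 0 < b < a -> a < p -> i < p -> i' < p ->
  a * i + b * i' = a * i' + b * i %[mod p] -> i = i'.
Proof.
move=> pp /andP[b0 ba] ap ip i'p E.
apply: (@mod_cancel p (a - b)) => //.
  apply/negP => d; have := dvdn_leq _ d; lia.
have h1 : b * i <= a * i by rewrite leq_mul // ltnW.
have h2 : b * i' <= a * i' by rewrite leq_mul // ltnW.
move: E; rewrite !mulnBl.
have -> : a * i + b * i' = (b * i + b * i') + (a * i - b * i) by lia.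
have -> : a * i' + b * i = (b * i + b * i') + (a * i' - b * i') by lia.
by move/eqP; rewrite eqn_modDl => /eqP.
Qed.

Lemma cancel_ab2 p a b i i' : prime p -> 0 < a < p -> 0 < b < p -> a != b ->
  i < p -> i' < p ->
  a * i + b * i' = a * i' + b * i %[mod p] -> i = i'.
Proof.
move=> pp /andP[a0 ap] /andP[b0 bp] ab ip i'p E.
case: (ltngtP a b) => h.
- apply/esym; apply: (@cancel_ab p b a i' i) => //; first by rewrite a0.
  by rewrite addnC E addnC.
- by apply: (@cancel_ab p a b) => //; rewrite b0.
- by rewrite h eqxx in ab.
Qed.

Section Main.
Variables (p a b : nat).
Hypotheses (pp : prime p) (ap : 0 < a < p) (bp : 0 < b < p) (ab : a != b).

Let p0 : 0 < p. Proof. exact: prime_gt0. Qed.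

Definition kk (c : nat) (i j : nat) : 'I_p :=
  Ordinal (ltn_pmod (j + c * i * p.-1) p0).

Definition phi (c : 'I_p * 'I_p) : 'I_p * 'I_p := (kk a c.1 c.2, kk b c.1 c.2).

Lemma phi_inj : injective phi.
Proof.
move=> [i j] [i' j'] [E1 E2].
have q0 : ~~ (p %| p.-1).
  apply/negP => d; have p1 := prime_gt1 pp.
  have := dvdn_leq _ d; lia.
have E : (j + a * i * p.-1) + (j' + b * i' * p.-1)
       = (j' + a * i' * p.-1) + (j + b * i * p.-1) %[mod p].
  by rewrite -modnDm E1 -E2 modnDm.
have E' : p.-1 * (a * i + b * i') = p.-1 * (a * i' + b * i) %[mod p].
  move: E.
  have -> : j + a * i * p.-1 + (j' + b * i' * p.-1) = (j + j') + p.-1 * (a * i + b * i') by lia.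
  have -> : j' + a * i' * p.-1 + (j + b * i * p.-1) = (j + j') + p.-1 * (a * i' + b * i) by lia.
  by move/eqP; rewrite eqn_modDl => /eqP.
have ii : i = i' :> nat.
  apply: (@cancel_ab2 p a b i i' pp ap bp ab (ltn_ord i) (ltn_ord i')).
  apply: (@mod_cancel p p.-1 _ _ pp q0 (ltn_pmod _ p0) (ltn_pmod _ p0)); by rewrite modnMmr E' -modnMmr.
have jj : j = j' :> nat.
  by move/eqP: E1; rewrite -ii eqn_modDr !modn_small // => /eqP.
by move/val_inj: ii => ->; move/val_inj: jj => ->.
Qed.

Lemma count_main x y :
  cellcount p (arrA p a) (arrA p b) x y =
  #|[set k : 'I_p | basevec p k == x]| * #|[set k : 'I_p | basevec p k == y]|.
Proof.
rewrite /cellcount -cardsX -[RHS](card_preimset _ phi_inj); apply: eq_card => -[i j]; rewrite !inE /= !arrAE //.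
Qed.

End Main.

Lemma card_lt p h : h <= p -> #|[set k : 'I_p | k < h]| = h.
Proof.
move=> hp.
have -> : [set k : 'I_p | k < h] = [set widen_ord hp k | k : 'I_h].
  apply/setP => k; rewrite !inE; apply/idP/imsetP.
    by move=> kh; exists (Ordinal kh) => //; apply: val_inj.
  by move=> [k' _ ->] /=.
by rewrite card_imset ?card_ord //; by move=> u v /(congr1 val) /= /val_inj.
Qed.

Theorem mainTheorem15 (p alpha beta : nat) :
  prime p -> odd p ->
  0 < alpha < p -> 0 < beta < p -> alpha != beta ->
  [/\ cellcount p (arrA p alpha) (arrA p beta) true false = (p ^ 2 - 1) %/ 4,
      cellcount p (arrA p alpha) (arrA p beta) false true = (p ^ 2 - 1) %/ 4,
      cellcount p (arrA p alpha) (arrA p beta) false false = (p - 1) ^ 2 %/ 4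
    & cellcount p (arrA p alpha) (arrA p beta) true true = (p + 1) ^ 2 %/ 4].
Proof.
move=> pp op ap bp ab.
have hp : p.+1./2 <= p by have := prime_gt1 pp; lia.
have c1 : #|[set k : 'I_p | basevec p k == true]| = p.+1./2.
  by rewrite -(@card_lt p _ hp); apply: eq_card => k; rewrite !inE eqb_id.
have c0 : #|[set k : 'I_p | basevec p k == false]| = p - p.+1./2.
  have := cardsC [set k : 'I_p | basevec p k == true]; rewrite card_ord c1 => E.
  have -> : p - p.+1./2 = #|~: [set k : 'I_p | basevec p k == true]| by rewrite -{1}E addKn.
  by apply: eq_card => k; rewrite !inE; case: (basevec p k).
rewrite !count_main // c1 c0.
have Ep : p = (p./2).*2.+1.
  by have := odd_double_half p; rewrite op -muln2 => <-; lia.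
move: (p./2) Ep => m ->.
have -> : m.*2.+2./2 = m.+1 by rewrite -doubleS doubleK.
have -> : m.*2.+1 - m.+1 = m by lia.
have -> : (m.*2.+1) ^ 2 - 1 = 4 * (m.+1 * m) by rewrite -!muln2; nia.
have -> : (m.*2.+1 - 1) ^ 2 = 4 * (m * m) by rewrite -!muln2; nia.
have -> : (m.*2.+1 + 1) ^ 2 = 4 * (m.+1 * m.+1) by rewrite -!muln2; nia.
by rewrite !mulKn // mulnC.
Qed.
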